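(* Let $N$ and $M$ be large positive parameters, let $\mathcal{X}$ be any subset of $\{1,2,\ldots,10^M\}$, and let $\Delta=\Delta(N)$ be any function with $\Delta\to\infty$. For a prime $p$, let $J_p$ be the number of solutions of $$x\equiv y\pmod p;\qquad x,y\in\mathcal{X}.$$ Then for $\pi(N)\bigl(1+O(1/\Delta)\bigr)$ primes $p\le N$ we have $$J_p=|\mathcal{X}|+O\!\left(\frac{|\mathcal{X}|^2 M}{\pi(N)\log M}\,\Delta\right).$$
   Context: $\pi(N)$ denotes the number of primes $p\le N$. *)

(* Defs.v *)
From mathcomp Require Import all_boot.
From Stdlib Require Import Reals.

Definition primepi (N : nat) : nat := count prime (iota 0 N.+1).

(* J_p(X) = #{(x,y) in X x X : x = y mod p}, X given as a duplicate-free list *)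
Definition Jp (X : seq nat) (p : nat) : nat :=
  size [seq xy <- [seq (x, y) | x <- X, y <- X] | xy.1 == xy.2 %[mod p]].

Definition tends_to_infty (D : nat -> R) : Prop :=
  forall B : R, exists n0 : nat, forall n : nat, (n0 <= n)%N -> (B <= D n)%R.

Definition Rleb_dec (a b : R) : bool := if Rle_dec a b then true else false.

Definition good_primes (X : seq nat) (N : nat) (E : R) : nat :=
  count (fun p => prime p && Rleb_dec (Rabs (INR (Jp X p) - INR (size X))) E)
        (iota 0 N.+1).

(* Main.v *)
From mathcomp Require Import all_boot zify.
Require Import Defs.
From Stdlib Require Import Reals Lia Lra.

Lemma expn_pow a b : expn a b = Nat.pow a b.
Proof. elim: b => [|b IH]; first by rewrite expn0. by rewrite expnS IH. Qed.

Lemma prod_dvd n (l : seq nat) : uniq l -> all prime l -> all (fun p => p %| n) l ->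
  \prod_(p <- l) p %| n.
Proof.
elim: l => [|q l IH] /=; first by rewrite big_nil dvd1n.
move=> /andP[ql ul] /andP[pq pl] /andP[qn ln].
rewrite big_cons Gauss_dvd ?qn ?IH //.
rewrite prime_coprime // Euclid_dvd_prod //.
apply/negP; elim: l ql pl {IH ul ln} => [|r l IH2] /=; first by rewrite big_nil.
rewrite inE negb_or => /andP[qr ql] /andP[pr pl].
rewrite big_cons /= => /orP[|]; last exact: IH2.
by rewrite dvdn_prime2 // (negbTE qr).
Qed.

Lemma pow_le_prod a (l : seq nat) : all (fun p => a <= p) l -> expn a (size l) <= \prod_(p <- l) p.
Proof.
elim: l => [|q l IH] /=; first by rewrite big_nil expn0.
move=> /andP[aq al]; rewrite big_cons; rewrite expnS; exact: (leq_mul aq (IH al)).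
Qed.

Lemma omega_bound M n : 0 < M -> 0 < n <= expn 10 M ->
  size (primes n) <= Nat.sqrt M + trunc_log (Nat.sqrt M).+1 (expn 10 M).
Proof.
move=> M0 /andP[n0 nM].
set s := Nat.sqrt M.
have [h1 h2] := Nat.sqrt_spec M (Nat.le_0_l _).
have s1 : 0 < s by rewrite /s; lia.
rewrite -(count_predC (fun p => p <= s)) leq_add //.
  rewrite -size_filter; apply: (@leq_trans (size (iota 1 s))); last by rewrite size_iota.
  apply: uniq_leq_size; first by rewrite filter_uniq // primes_uniq.
  move=> p; rewrite mem_filter mem_iota => /andP[ps]; rewrite mem_primes => /andP[pp _].
  by rewrite prime_gt0 //= add1n ltnS.
rewrite -size_filter; apply: trunc_log_max; first by rewrite ltnS.
set l := filter _ _.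
apply: (@leq_trans (\prod_(p <- l) p)); first apply: pow_le_prod.
  by apply/allP => p; rewrite mem_filter /= -ltnNge => /andP[].
apply: leq_trans nM; apply: dvdn_leq => //; apply: prod_dvd.
- by rewrite filter_uniq // primes_uniq.
- by apply/allP => p; rewrite mem_filter mem_primes => /andP[_ /andP[]].
- by apply/allP => p; rewrite mem_filter mem_primes => /andP[_ /and3P[]].
Qed.

Lemma count_pdiv N n : 0 < n ->
  count (fun p => prime p && (p %| n)) (iota 0 N.+1) <= size (primes n).
Proof.
move=> n0; rewrite -size_filter; apply: uniq_leq_size; first by rewrite filter_uniq // iota_uniq.
by move=> p; rewrite mem_filter mem_primes n0 => /andP[/andP[-> ->]].
Qed.

Definition dist (x y : nat) := (x - y) + (y - x).

Lemma mod_dist p x y : (x == y %[mod p]) = (p %| dist x y).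
Proof.
rewrite /dist; case: (leqP x y) => h.
  have -> : x - y = 0 by lia.
  by rewrite add0n eq_sym eqn_mod_dvd.
have -> : y - x = 0 by lia.
by rewrite addn0 eqn_mod_dvd // ltnW.
Qed.

Lemma count_split T (a b : pred T) l :
  count a l = count (fun z => a z && b z) l + count (fun z => a z && ~~ b z) l.
Proof.
elim: l => //= z l ->; case: (a z); case: (b z) => /=; lia.
Qed.

Lemma count_diag (X : seq nat) : uniq X ->
  count (fun xy : nat * nat => xy.1 == xy.2) [seq (x, y) | x <- X, y <- X] = size X.
Proof.
move=> uX.
suff H : forall s, {subset s <= X} ->
  count (fun xy : nat * nat => xy.1 == xy.2) [seq (x, y) | x <- s, y <- X] = size s.
  by apply: H.
elim=> [|a s IH] sub //.
rewrite allpairs_cons count_cat IH; last by move=> z zs; apply: sub; rewrite inE zs orbT.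
rewrite count_map.
have -> : count (preim (pair a) (fun xy : nat * nat => xy.1 == xy.2)) X = count_mem a X.
  by apply: eq_count => z /=; rewrite eq_sym.
by rewrite count_uniq_mem // sub // inE eqxx.
Qed.

Definition offd (X : seq nat) p :=
  count (fun xy : nat * nat => (xy.1 != xy.2) && (p %| dist xy.1 xy.2))
        [seq (x, y) | x <- X, y <- X].

Lemma Jp_eq X p : uniq X -> Jp X p = size X + offd X p.
Proof.
move=> uX; rewrite /Jp size_filter (@count_split _ _ (fun xy : nat * nat => xy.1 == xy.2)).
congr (_ + _).
  rewrite -(count_diag X uX); apply: eq_count => -[x y] /=.
  by case: (eqVneq x y) => [->|ne]; rewrite ?eqxx ?andbF.
apply: eq_count => -[x y] /=; rewrite mod_dist andbC //.
Qed.

Lemma count_sum_nat (T : Type) (a : pred T) l :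
  count a l = \sum_(z <- l) (a z : nat).
Proof. by elim: l => [|z l IH] /=; rewrite ?big_nil ?big_cons ?IH. Qed.

Lemma sum_cond_count (T : Type) (a b : pred T) l :
  \sum_(z <- l | a z) (b z : nat) = count (fun z => a z && b z) l.
Proof. elim: l => [|z l IH] /=; rewrite ?big_nil ?big_cons ?IH //. by case: (a z). Qed.

Lemma sum_le_const (T : eqType) (f : T -> nat) W l :
  (forall x, x \in l -> f x <= W) -> \sum_(x <- l) f x <= size l * W.
Proof.
elim: l => [|z l IH] H; rewrite ?big_nil ?big_cons //=.
rewrite mulSn leq_add //; first by apply: H; rewrite inE eqxx.
by apply: IH => x xl; apply: H; rewrite inE xl orbT.
Qed.

Lemma sum_offd X N M : all (fun x => (1 <= x <= 10 ^ M)%N) X -> 0 < M ->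
  \sum_(p <- iota 0 N.+1 | prime p) offd X p <=
  size X * size X * (Nat.sqrt M + trunc_log (Nat.sqrt M).+1 (expn 10 M)).
Proof.
move=> aX M0.
rewrite /offd.
under eq_bigr => p _ do rewrite count_sum_nat.
rewrite exchange_big /= -(size_allpairs pair X X).
apply: sum_le_const => -[x y] /allpairsP [[x' y'] [/= xX yX [-> ->]]].
rewrite sum_cond_count.
have [->|ne] := eqVneq x' y'.
  rewrite (@eq_count _ _ pred0) ?count_pred0 // => p /=; by rewrite ?eqxx andbF.
have hx := allP aX _ xX; have hy := allP aX _ yX.
rewrite /= -expn_pow in hx hy.
have n0 : 0 < dist x' y' by rewrite /dist; move: ne; case: eqP => // ?; lia.
have n1 : dist x' y' <= expn 10 M by rewrite /dist; lia.
apply: (@leq_trans (size (primes (dist x' y')))); last by apply: omega_bound => //; rewrite n0 n1.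
have -> : count (fun z : nat => [&& prime z, ~~ false & z %| dist x' y']) (0 :: iota 1 N) =
  count (fun p => prime p && (p %| dist x' y')) (iota 0 N.+1).
  by apply: eq_count => p /=.
exact: count_pdiv.
Qed.

Lemma INR_addn m n : INR (m + n) = (INR m + INR n)%R.
Proof. exact: plus_INR. Qed.
Lemma INR_muln m n : INR (m * n) = (INR m * INR n)%R.
Proof. exact: mult_INR. Qed.

Lemma markov (l : seq nat) (a b : pred nat) (e : nat -> nat) (E : R) :
  (0 <= E)%R -> (forall p, a p -> ~~ b p -> (E < INR (e p))%R) ->
  (INR (count (fun p => a p && ~~ b p) l) * E <= INR (\sum_(p <- l | a p) e p))%R /\
  count (fun p => a p && ~~ b p) l <= \sum_(p <- l | a p) e p.
Proof.
move=> E0 H; elim: l => [|z l [IH1 IH2]]; first by rewrite big_nil /=; split => //; lra.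
rewrite big_cons.
have -> : count (fun p => a p && ~~ b p) (z :: l) = (a z && ~~ b z) + count (fun p => a p && ~~ b p) l by [].
case az: (a z); last by rewrite andFb add0n.
case bz: (b z).
  change (nat_of_bool (true && ~~ true)) with 0%N; rewrite add0n; split; last exact: leq_trans IH2 (leq_addl _ _).
  rewrite INR_addn; have := pos_INR (e z); lra.
have hz := H z az (negbT bz).
have ez : 0 < e z.
  case: (e z) hz => //= hz; lra.
change (nat_of_bool (true && ~~ false)) with 1%N; rewrite add1n S_INR INR_addn; split; last by rewrite -add1n leq_add.
lra.
Qed.

Lemma ln_le x y : (0 < x)%R -> (x <= y)%R -> (ln x <= ln y)%R.
Proof. move=> x0 [xy|<-]; last lra. by apply: Rlt_le; apply: ln_increasing. Qed.

Lemma wL M : (2 <= M)%N ->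
  (INR (Nat.sqrt M + trunc_log (Nat.sqrt M).+1 (expn 10 M)) * ln (INR M) <= 20 * INR M)%R.
Proof.
move=> M2.
have [h1 h2] := Nat.sqrt_spec M (Nat.le_0_l _).
set s := Nat.sqrt M in h1 h2 *.
set K := trunc_log s.+1 (expn 10 M).
have s1 : 0 < s by rewrite /s; lia.
have hK : expn s.+1 K <= expn 10 M by apply: trunc_logP => //; rewrite expn_gt0.
rewrite INR_addn.
have hs : (INR s * INR s <= INR M)%R by rewrite -mult_INR; apply: le_INR.
have hs2 : (INR M < (INR s + 1) ^ 2)%R.
  rewrite -S_INR -pow_INR; apply: lt_INR; rewrite /= Nat.mul_1_r; exact: h2.
have sR : (1 <= INR s)%R by apply: (le_INR 1); apply/leP.
have m1 : (1 < INR M)%R by apply: (lt_INR 1); apply/ltP.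
have L0 : (0 < ln (INR M))%R by rewrite -ln_1; apply: ln_increasing; lra.
have L2 : (ln (INR M) < 2 * ln (INR s + 1))%R.
  rewrite -(ln_pow _ _ 2); last lra.
  by apply: ln_increasing => //; lra.
have l1 : (ln (INR s + 1) <= INR s)%R.
  have := exp_ineq1_le (ln (INR s + 1)); rewrite exp_ln; lra.
have lK : (INR K * ln (INR s + 1) <= INR M * ln 10)%R.
  rewrite -ln_pow; last lra.
  have -> : (10 = INR 10)%R by rewrite /=; lra.
  rewrite -ln_pow; last by apply: (lt_INR 0); apply/ltP.
  rewrite -S_INR -!pow_INR -!expn_pow.
  apply: ln_le; first by apply: (lt_INR 0); apply/ltP; rewrite expn_gt0.
  by apply: le_INR; apply/leP.
have l10 : (ln 10 <= 9)%R.
  have := exp_ineq1_le (ln 10); rewrite exp_ln; lra.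
have K0 := pos_INR K.
have lsp : (0 <= ln (INR s + 1))%R by lra.
nra.
Qed.

Theorem lemma5 :
  exists C : R, (0 < C)%R /\
  exists M0 : nat,
  forall D : nat -> R, tends_to_infty D ->
  exists N0 : nat,
  forall (N M : nat), (N0 <= N)%N -> (M0 <= M)%N ->
  forall X : seq nat, uniq X -> all (fun x => (1 <= x <= 10 ^ M)%N) X ->
  (INR (primepi N) * (1 - C / D N) <=
   INR (good_primes X N
          (C * (INR (size X) ^ 2 * INR M)
             / (INR (primepi N) * ln (INR M)) * D N)))%R.
Proof.
exists 5%R; split; first lra.
exists 2 => D HD.
have [n0 Hn0] := HD 1%R.
exists (maxn n0 2) => N M HN HM X uX aX.
have hD : (1 <= D N)%R by apply: Hn0; move: HN; rewrite geq_max => /andP[].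
have N2 : 2 <= N by move: HN; rewrite geq_max => /andP[].
have hpi : 0 < primepi N.
  rewrite /primepi -has_count; apply/hasP; exists 2 => //; rewrite mem_iota; lia.
set E := (5 * (INR (size X) ^ 2 * INR M) / (INR (primepi N) * ln (INR M)) * D N)%R.
set bP := fun p => Rleb_dec (Rabs (INR (Jp X p) - INR (size X))) E.
have hsplit := @count_split _ prime bP (iota 0 N.+1).
rewrite -/(primepi N) in hsplit.
rewrite /good_primes -/E -/bP.
set g := count _ _ in hsplit *.
set bad := count (fun z => prime z && ~~ bP z) _ in hsplit.
have m1 : (1 < INR M)%R by apply: (lt_INR 1); apply/ltP.
have L0 : (0 < ln (INR M))%R by rewrite -ln_1; apply: ln_increasing; lra.
have piR : (0 < INR (primepi N))%R by apply: (lt_INR 0); apply/ltP.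
have E0 : (0 <= E)%R.
  rewrite /E; apply: Rmult_le_pos; last lra.
  apply: Rmult_le_pos; last by apply: Rlt_le; apply: Rinv_0_lt_compat; nra.
  have := pos_INR (size X); have := pos_INR M; nra.
have Hb : forall p, prime p -> ~~ bP p -> (E < INR (offd X p))%R.
  move=> p _; rewrite /bP /Rleb_dec; case: Rle_dec => // h _.
  move: h; rewrite Jp_eq // INR_addn.
  have -> : (INR (size X) + INR (offd X p) - INR (size X) = INR (offd X p))%R by ring.
  rewrite Rabs_right; first lra.
  by apply: Rle_ge; apply: pos_INR.
have [mk1 mk2] := @markov (iota 0 N.+1) prime bP (offd X) E E0 Hb.
have S1 := @sum_offd X N M aX ltac:(lia).
have hpiE : INR (primepi N) = (INR g + INR bad)%R by rewrite hsplit INR_addn.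
rewrite hpiE.
suff : (INR bad * D N <= 5 * (INR g + INR bad))%R.
  move=> h; have hb := pos_INR bad; have hg := pos_INR g.
  have -> : ((INR g + INR bad) * (1 - 5 / D N) = (INR g + INR bad) - 5 * (INR g + INR bad) / D N)%R by field; lra.
  suff : (INR bad <= 5 * (INR g + INR bad) / D N)%R by lra.
  apply: (Rmult_le_reg_r (D N)); first lra.
  by rewrite /Rdiv Rmult_assoc Rinv_l; lra.
case: (posnP (size X)) => [X0|Xp].
  have : bad <= 0.
    apply: leq_trans mk2 _; apply: leq_trans S1 _; by rewrite X0.
  rewrite leqn0 => /eqP ->; rewrite /=; have := pos_INR g; lra.
set W := (Nat.sqrt M + trunc_log (Nat.sqrt M).+1 (expn 10 M)) in S1.
have hW := @wL M HM; rewrite -/W in hW.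
rewrite -/bad in mk1 mk2. rewrite /E in mk1 E0; clear Hb hsplit mk2; clearbody g bad; clear E bP.
set x := INR (size X) in mk1 E0 *.
have x1 : (1 <= x)%R by apply: (le_INR 1); apply/leP.
have S2 : (INR (\sum_(p <- iota 0 N.+1 | prime p) offd X p) <= x * x * INR W)%R.
  by rewrite -!INR_muln; apply: le_INR; apply/leP.
set pi := (INR g + INR bad)%R in hpiE *.
rewrite hpiE in piR mk1 E0.
set L := ln (INR M) in L0 E0 mk1 hW *.
set m := INR M in m1 hW E0 mk1 L0 *.
set d := D N in hD E0 mk1 *.
set b := INR bad in mk1 *.
have hb := pos_INR bad.
have hg := pos_INR g.
have piE : pi = (INR g + b)%R by [].
clearbody x pi L m d b. rewrite -/b in hb.
have k1 : (b * (5 * x ^ 2 * m * d) <= x * x * INR W * (pi * L))%R.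
  have : (b * (5 * (x ^ 2 * m) / (pi * L) * d) * (pi * L) <= x * x * INR W * (pi * L))%R.
    apply: Rmult_le_compat_r; [apply: Rmult_le_pos; lra | lra].
  have -> : (b * (5 * (x ^ 2 * m) / (pi * L) * d) * (pi * L) = b * (5 * x ^ 2 * m * d))%R.
    field; lra.
  done.
have k2 : (x * x * INR W * (pi * L) <= x * x * pi * (20 * m))%R.
  have : (0 <= x * x * pi)%R by nra.
  nra.
have k3 : (b * d * (5 * x ^ 2 * m) <= (4 * pi) * (5 * x ^ 2 * m))%R by nra.
have pos : (0 < 5 * x ^ 2 * m)%R by nra.
have := Rmult_le_reg_r _ _ _ pos k3.
lra.
Qed.
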